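(* Let $n_x,n_y,n_z\ge 1$ be integers, $N:=n_xn_yn_z$, and let $f\in[0,1]^N$. Let $\mu_1,\mu_2,\mu_3>0$. Then each of the following two minimization problems has a minimizer, i.e. the infimum is attained at some $(u,s,l)\in\mathbb{R}^N\times\mathbb{R}^N\times\mathbb{R}^N$ with $u+s+l=f$: (a) $\displaystyle \inf_{u,s,l\in\mathbb{R}^N,\ u+s+l=f}\ \Big(\mu_1\|\nabla_{x,z}u\|_{2,1}+\mu_2\|\Delta_z u\|_1+\iota_{[0,1]^N}(u)\Big)+\|\nabla_y s\|_1+\mu_3\|\nabla_{x,y}l\|_{2,1}$; (b) $\displaystyle \inf_{u,s,l\in\mathbb{R}^N,\ u+s+l=f}\ \Big(\mu_1\|\nabla_{x,y,z}u\|_{2,1}+\iota_{[0,1]^N}(u)\Big)+\|\nabla_y s\|_1+\mu_3\|\nabla_{x,y}l\|_{2,1}$.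
   Context: A 3D image of size $n_x\times n_y\times n_z$ is identified with a vector in $\mathbb{R}^N$, $N=n_xn_yn_z$ (column- and slice-wise reshaping). $\otimes$ denotes the Kronecker product and $I_m$ the $m\times m$ identity. For $m\ge1$, $D_m\in\mathbb{R}^{m,m}$ is the forward difference matrix whose $i$-th row, for $i=1,\dots,m-1$, has entry $-1$ in column $i$ and $1$ in column $i+1$ (zeros elsewhere), and whose last row is zero. $D_m^2\in\mathbb{R}^{m,m}$ is the matrix whose first and last rows are zero and whose $i$-th row, for $i=2,\dots,m-1$, has entries $1,-2,1$ in columns $i-1,i,i+1$ (zeros elsewhere). Set $D_x:=I_{n_z}\otimes I_{n_y}\otimes D_{n_x}$, $D_y:=I_{n_z}\otimes D_{n_y}\otimes I_{n_x}$, $D_z:=D_{n_z}\otimes I_{n_y}\otimes I_{n_x}$, $D_{zz}:=D^2_{n_z}\otimes I_{n_y}\otimes I_{n_x}$, and define $\nabla_y:=D_y$, $\Delta_z:=D_{zz}$, and the stacked operators $\nabla_{x,z}:=\begin{pmatrix}D_x\\ D_z\end{pmatrix}$, $\nabla_{x,y}:=\begin{pmatrix}D_x\\ D_y\end{pmatrix}$, $\nabla_{x,y,z}:=\begin{pmatrix}D_x\\ D_y\\ D_z\end{pmatrix}$. For $w\in\mathbb{R}^{dN}$ the grouped norm is $\|w\|_{2,1}:=\sum_{i=1}^N\big(\sum_{j=0}^{d-1}w_{i+jN}^2\big)^{1/2}$; $\|\cdot\|_1$ is the usual $\ell_1$ norm. For a set $\mathcal{C}$, $\iota_{\mathcal{C}}(u)=0$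 if $u\in\mathcal{C}$ and $+\infty$ otherwise. *)

(* Defs.v *)
From HB Require Import structures.
From mathcomp Require Import all_boot all_order all_algebra.
From mathcomp Require Import mxtens.
From mathcomp Require Import boolp reals constructive_ereal.
Set Implicit Arguments. Unset Strict Implicit. Unset Printing Implicit Defensive.
Import Order.TTheory GRing.Theory Num.Theory.
Local Open Scope ring_scope.

Section Defs.
Variable R : realType.

Definition Dfwd (m : nat) : 'M[R]_m :=
  \matrix_(i, j) (if (i.+1 < m)%N then (j == i.+1 :> nat)%:R - (j == i :> nat)%:R
                  else 0).

Definition D2 (m : nat) : 'M[R]_m :=
  \matrix_(i, j) (if ((0 < i) && (i.+1 < m))%N then
                    (j.+1 == i :> nat)%:R - 2 * (j == i :> nat)%:R
                    + (j == i.+1 :> nat)%:R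
                  else 0).

(* 3D operators, via Kronecker products (tensmx, A *t B, with the standard
   index convention (i,j) |-> i * p + j).  The image space has dimension
   nz * ny * nx = N. *)
Definition Dx nx ny nz : 'M[R]_(nz * ny * nx) := (1%:M *t 1%:M) *t Dfwd nx.
Definition Dy nx ny nz : 'M[R]_(nz * ny * nx) := (1%:M *t Dfwd ny) *t 1%:M.
Definition Dz nx ny nz : 'M[R]_(nz * ny * nx) := (Dfwd nz *t 1%:M) *t 1%:M.
Definition Dzz nx ny nz : 'M[R]_(nz * ny * nx) := (D2 nz *t 1%:M) *t 1%:M.

(* vertical stacking of d blocks F 0, ..., F (d-1), each N x M:
   row j * N + i of the stack is row i of F j *)
Definition stack d N M (F : 'I_d -> 'M[R]_(N, M)) : 'M[R]_(d * N, M) :=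
  \matrix_(k, c) F (mxtens_unindex k).1 (mxtens_unindex k).2 c.

Definition grad_xz nx ny nz : 'M[R]_(2 * (nz * ny * nx), nz * ny * nx) :=
  stack (fun j : 'I_2 => nth 0 [:: Dx nx ny nz; Dz nx ny nz] j).
Definition grad_xy nx ny nz : 'M[R]_(2 * (nz * ny * nx), nz * ny * nx) :=
  stack (fun j : 'I_2 => nth 0 [:: Dx nx ny nz; Dy nx ny nz] j).
Definition grad_xyz nx ny nz : 'M[R]_(3 * (nz * ny * nx), nz * ny * nx) :=
  stack (fun j : 'I_3 => nth 0 [:: Dx nx ny nz; Dy nx ny nz; Dz nx ny nz] j).

Definition norm21 d N (w : 'cV[R]_(d * N)) : R :=
  \sum_(i < N) Num.sqrt (\sum_(j < d) w (mxtens_index (j, i)) 0 ^+ 2).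

Definition norm1 N (w : 'cV[R]_N) : R := \sum_(i < N) `|w i 0|.

Definition in_box N (u : 'cV[R]_N) : Prop := forall i, 0 <= u i 0 <= 1.

Definition iota_box N (u : 'cV[R]_N) : \bar R :=
  if `[< in_box u >] then 0%E else +oo%E.

Local Open Scope ereal_scope.

Definition energy_a nx ny nz (mu1 mu2 mu3 : R)
  (u s l : 'cV[R]_(nz * ny * nx)) : \bar R :=
  ((mu1 * norm21 (grad_xz nx ny nz *m u) + mu2 * norm1 (Dzz nx ny nz *m u))%R%:E
     + iota_box u)
  + (norm1 (Dy nx ny nz *m s))%:E + (mu3 * norm21 (grad_xy nx ny nz *m l))%R%:E.

Definition energy_b nx ny nz (mu1 mu3 : R)
  (u s l : 'cV[R]_(nz * ny * nx)) : \bar R :=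
  ((mu1 * norm21 (grad_xyz nx ny nz *m u))%R%:E + iota_box u)
  + (norm1 (Dy nx ny nz *m s))%:E + (mu3 * norm21 (grad_xy nx ny nz *m l))%R%:E.

Definition is_minimizer N (E : 'cV[R]_N -> 'cV[R]_N -> 'cV[R]_N -> \bar R)
  (f u s l : 'cV[R]_N) : Prop :=
  (u + s + l = f)%R /\
  forall u' s' l' : 'cV[R]_N, (u' + s' + l' = f)%R -> E u s l <= E u' s' l'.

End Defs.

(* Main.v *)
Require Import Defs.
From HB Require Import structures.
From mathcomp Require Import all_boot all_order all_algebra.
From mathcomp Require Import mxtens lra.
From mathcomp Require Import boolp classical_sets reals constructive_ereal topology normedtype realfun derive matrix_normedtype.
Require Import Defs.
Import Order.TTheory GRing.Theory Num.Theory.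
Import numFieldTopology.Exports numFieldNormedType.Exports.
Local Open Scope ring_scope.
Lemma sum_tens (R : realType) (m n : nat) (F : 'I_(m*n) -> R) :
  \sum_k F k = \sum_(a < m) \sum_(b < n) F (mxtens_index (a, b)).
Proof.
rewrite pair_big /=.
rewrite (reindex (@mxtens_index m n)) /=; last first.
  by exists (@mxtens_unindex m n) => k _; rewrite (mxtens_indexK, mxtens_unindexK).
by apply: eq_bigr => -[a b].
Qed.

Lemma sum_delta (R : realType) n (z : 'I_n) (G : 'I_n -> R) :
  \sum_c (1%:M : 'M[R]_n) z c * G c = G z.
Proof.
rewrite (bigD1 z) //= big1 ?addr0; first by rewrite mxE eqxx mul1r.
by move=> c cz; rewrite mxE eq_sym (negbTE cz) mul0r.
Qed.

Definition idx nz ny nx (z : 'I_nz) (y : 'I_ny) (x : 'I_nx) : 'I_(nz * ny * nx) :=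
  mxtens_index (mxtens_index (z, y), x).
Arguments idx {nz ny nx}.

Lemma tens3_mul (R : realType) nz ny nx (A : 'M[R]_nz) (B : 'M[R]_ny) (C : 'M[R]_nx)
  (v : 'cV[R]_(nz * ny * nx)) z y x :
  (((A *t B) *t C) *m v) (idx z y x) 0 =
  \sum_c \sum_d \sum_b A z c * B y d * C x b * v (idx c d b) 0.
Proof.
rewrite mxE sum_tens sum_tens; apply: eq_bigr => c _; apply: eq_bigr => d _.
by apply: eq_bigr => b _; rewrite !tensmxE.
Qed.

Lemma Dfwd_mulE (R : realType) n (i j : 'I_n) (g : 'I_n -> R) : val j = i.+1 ->
  \sum_k Dfwd R n i k * g k = g j - g i.
Proof.
move=> hj.
have hi : (i.+1 < n)%N by rewrite -hj ltn_ord.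
rewrite (eq_bigr (fun k => (k == j)%:R * g k - (k == i)%:R * g k)); last first.
  by move=> k _; rewrite mxE hi -mulrBl -hj.
rewrite sumrB (bigD1 j) //= big1 ?addr0; last first.
  by move=> k kj; rewrite (negbTE kj) mul0r.
rewrite (bigD1 i) //= big1 ?addr0; last first.
  by move=> k kj; rewrite (negbTE kj) mul0r.
by rewrite !eqxx !mul1r.
Qed.

Lemma Dfwd_mul0 (R : realType) n (i : 'I_n) (g : 'I_n -> R) : ~~ (i.+1 < n)%N ->
  \sum_k Dfwd R n i k * g k = 0.
Proof.
move=> hi; rewrite big1 // => k _; rewrite mxE (negbTE hi) mul0r //.
Qed.
Lemma DxE (R : realType) nx ny nz (v : 'cV[R]_(nz * ny * nx)) z y x :
  (Dx R nx ny nz *m v) (idx z y x) 0 = \sum_b Dfwd R nx x b * v (idx z y b) 0.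
Proof.
rewrite /Dx tens3_mul.
rewrite (eq_bigr (fun c => (1%:M : 'M[R]_nz) z c * \sum_d ((1%:M : 'M[R]_ny) y d *
   \sum_b (Dfwd R nx x b * v (idx c d b) 0)))); last first.
  move=> c _; rewrite mulr_sumr; apply: eq_bigr => d _; rewrite mulr_sumr mulr_sumr.
  by apply: eq_bigr => b _; rewrite !mulrA.
rewrite sum_delta sum_delta //.
Qed.

Lemma DyE (R : realType) nx ny nz (v : 'cV[R]_(nz * ny * nx)) z y x :
  (Dy R nx ny nz *m v) (idx z y x) 0 = \sum_d Dfwd R ny y d * v (idx z d x) 0.
Proof.
rewrite /Dy tens3_mul.
rewrite (eq_bigr (fun c => (1%:M : 'M[R]_nz) z c * \sum_d (Dfwd R ny y d *
   \sum_b ((1%:M : 'M[R]_nx) x b * v (idx c d b) 0)))); last first.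
  move=> c _; rewrite mulr_sumr; apply: eq_bigr => d _; rewrite mulr_sumr mulr_sumr.
  by apply: eq_bigr => b _; rewrite !mulrA.
rewrite sum_delta; apply: eq_bigr => d _; rewrite sum_delta //.
Qed.

Lemma stack_mul (R : realType) d N M (F : 'I_d -> 'M[R]_(N, M)) (v : 'cV[R]_M) j i :
  (stack F *m v) (mxtens_index (j, i)) 0 = (F j *m v) i 0.
Proof.
rewrite !mxE; apply: eq_bigr => c _; rewrite mxE mxtens_indexK //.
Qed.

Lemma sum_ge_term (R : realType) n (F : 'I_n -> R) i :
  (forall j, 0 <= F j) -> F i <= \sum_j F j.
Proof.
move=> F0; rewrite (bigD1 i) //= lerDl sumr_ge0 //.
Qed.

Lemma norm21_ge (R : realType) d N (w : 'cV[R]_(d * N)) j i :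
  `| w (mxtens_index (j, i)) 0 | <= norm21 w.
Proof.
rewrite /norm21.
have H := @sum_ge_term R N (fun i => Num.sqrt (\sum_(j < d) w (mxtens_index (j, i)) 0 ^+ 2)) i
  (fun k => sqrtr_ge0 _).
apply: le_trans H; rewrite -sqrtr_sqr ler_wsqrtr //.
apply: (@sum_ge_term R d (fun j => w (mxtens_index (j, i)) 0 ^+ 2) j).
by move=> k; exact: sqr_ge0.
Qed.

Lemma norm21_ge0 (R : realType) d N (w : 'cV[R]_(d * N)) : 0 <= norm21 w.
Proof. by apply: sumr_ge0 => i _; exact: sqrtr_ge0. Qed.

Lemma norm1_ge0 (R : realType) N (w : 'cV[R]_N) : 0 <= norm1 w.
Proof. by apply: sumr_ge0 => i _. Qed.
Lemma Dfwd_cst (R : realType) n (i : 'I_n) (c : R) : \sum_k Dfwd R n i k * c = 0.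
Proof.
case hi: (i.+1 < n)%N; last by rewrite Dfwd_mul0 // hi.
by rewrite (@Dfwd_mulE R n i (Ordinal hi) (fun=> c)) // subrr.
Qed.

Lemma tele (R : realType) (L : nat -> R) (C : R) m :
  (forall k, (k < m)%N -> `|L k.+1 - L k| <= C) ->
  forall k, (k <= m)%N -> `|L k - L 0%N| <= k%:R * C.
Proof.
move=> H; elim=> [|k IH] hk; first by rewrite subrr normr0 mul0r.
have := IH (ltnW hk); have := H k hk => h1 h2.
rewrite (_ : L k.+1 - L 0%N = (L k.+1 - L k) + (L k - L 0%N)); last by rewrite addrA subrK.
rewrite -addn1 natrD mulrDl mul1r; apply: le_trans (ler_normD _ _) _.
rewrite [X in _ <= X]addrC addn1; exact: lerD h1 h2.
Qed.

Definition zof nz ny nx (k : 'I_(nz * ny * nx)) : 'I_nz :=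
  (mxtens_unindex (mxtens_unindex k).1).1.
Arguments zof {nz ny nx}.

Definition cvec (R : realType) nz ny nx (l : 'cV[R]_(nz * ny.+1 * nx.+1)) :
  'cV[R]_(nz * ny.+1 * nx.+1) :=
  \col_k l (idx (zof k) ord0 ord0) 0.
Arguments cvec {R nz ny nx}.

Lemma zof_idx nz ny nx z y x : zof (@idx nz ny nx z y x) = z.
Proof. by rewrite /zof /idx !mxtens_indexK. Qed.

Lemma idx_ind nz ny nx (P : 'I_(nz * ny * nx) -> Prop) :
  (forall z y x, P (idx z y x)) -> forall k, P k.
Proof.
move=> H k; case: k / mxtens_indexP => k1 x; case: k1 / mxtens_indexP => z y.
exact: H.
Qed.

Lemma Dx_cvec (R : realType) nz ny nx (l : 'cV[R]_(nz * ny.+1 * nx.+1)) :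
  Dx R nx.+1 ny.+1 nz *m cvec l = 0.
Proof.
apply/matrixP => k j; rewrite ord1; move: k; apply: idx_ind => z y x.
rewrite [RHS]mxE DxE (eq_bigr (fun b => Dfwd R nx.+1 x b * l (idx z ord0 ord0) 0)).
  exact: Dfwd_cst.
by move=> b _; congr (_ * _); rewrite mxE zof_idx.
Qed.

Lemma Dy_cvec (R : realType) nz ny nx (l : 'cV[R]_(nz * ny.+1 * nx.+1)) :
  Dy R nx.+1 ny.+1 nz *m cvec l = 0.
Proof.
apply/matrixP => k j; rewrite ord1; move: k; apply: idx_ind => z y x.
rewrite [RHS]mxE DyE (eq_bigr (fun b => Dfwd R ny.+1 y b * l (idx z ord0 ord0) 0)).
  exact: Dfwd_cst.
by move=> b _; congr (_ * _); rewrite mxE zof_idx.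
Qed.

Lemma gradxy_Dx (R : realType) nx ny nz (l : 'cV[R]_(nz * ny * nx)) k :
  `| (Dx R nx ny nz *m l) k 0 | <= norm21 (grad_xy R nx ny nz *m l).
Proof.
have := @norm21_ge R _ _ (grad_xy R nx ny nz *m l) ord0 k.
by rewrite /grad_xy stack_mul.
Qed.

Arguments gradxy_Dx {R nx ny nz}.

Lemma gradxy_Dy (R : realType) nx ny nz (l : 'cV[R]_(nz * ny * nx)) k :
  `| (Dy R nx ny nz *m l) k 0 | <= norm21 (grad_xy R nx ny nz *m l).
Proof.
have := @norm21_ge R _ _ (grad_xy R nx ny nz *m l) ord_max k.
by rewrite /grad_xy stack_mul.
Qed.

Arguments gradxy_Dy {R nx ny nz}.

Lemma l_bound (R : realType) nz ny nx (l : 'cV[R]_(nz * ny.+1 * nx.+1)) z y x :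
  `| l (idx z y x) 0 - l (idx z ord0 ord0) 0 | <=
    (nx + ny)%:R * norm21 (grad_xy R nx.+1 ny.+1 nz *m l).
Proof.
set C := norm21 _.
have C0 : 0 <= C by exact: norm21_ge0.
have hx : `| l (idx z y x) 0 - l (idx z y ord0) 0 | <= nx%:R * C.
  have := @tele R (fun k => l (idx z y (inord k)) 0) C nx.
  move=> /(_ _ x (leq_ord x)); rewrite inord_val (_ : inord 0 = ord0); last first.
    by apply: val_inj; rewrite /= inordK.
  move=> H; apply: le_trans (H _) _.
  - move=> k hk; have := gradxy_Dx l (idx z y (inord k)).
    rewrite DxE (@Dfwd_mulE R nx.+1 (inord k) (inord k.+1)).
      by rewrite distrC.
    rewrite !inordK //; [by rewrite /= inordK | exact: ltnW].
  - by apply: (ler_wpM2r C0); rewrite ler_nat leq_ord.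
have hy : `| l (idx z y ord0) 0 - l (idx z ord0 ord0) 0 | <= ny%:R * C.
  have := @tele R (fun k => l (idx z (inord k) ord0) 0) C ny.
  move=> /(_ _ y (leq_ord y)); rewrite inord_val (_ : inord 0 = ord0); last first.
    by apply: val_inj; rewrite /= inordK.
  move=> H; apply: le_trans (H _) _.
  - move=> k hk; have := gradxy_Dy l (idx z (inord k) ord0).
    rewrite DyE (@Dfwd_mulE R ny.+1 (inord k) (inord k.+1)).
      by rewrite distrC.
    rewrite !inordK //; [by rewrite /= inordK | exact: ltnW].
  - by apply: (ler_wpM2r C0); rewrite ler_nat leq_ord.
rewrite (_ : l (idx z y x) 0 - l (idx z ord0 ord0) 0 =
  (l (idx z y x) 0 - l (idx z y ord0) 0) + (l (idx z y ord0) 0 - l (idx z ord0 ord0) 0));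
  last by rewrite addrA subrK.
apply: le_trans (ler_normD _ _) _; rewrite natrD mulrDl; exact: lerD hx hy.
Qed.
Lemma cont_cst (R : realType) (T : topologicalType) (c : R) : continuous (fun _ : T => c).
Proof. by move=> x; exact: cst_continuous. Qed.

Lemma cont_sum (R : realType) (T : topologicalType) n (F : 'I_n -> T -> R) :
  (forall i, continuous (F i)) -> continuous (fun w => \sum_i F i w).
Proof.
elim: n F => [|n IH] F HF.
  move=> x; rewrite (_ : (fun w => _) = (fun=> 0)); first exact: cst_continuous.
  by apply/funext => w; rewrite big_ord0.
rewrite (_ : (fun w => _) = (fun w => \sum_(i < n) F (widen_ord (leqnSn n) i) w + F ord_max w)).
  move=> x; apply: (continuousD _ (HF ord_max x)).
  exact: (IH (fun i => F (widen_ord (leqnSn n) i)) (fun i => HF _) x).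
by apply/funext => w; rewrite big_ord_recr.
Qed.

Definition ccont (R : realType) (T : topologicalType) m (v : T -> 'cV[R]_m) :=
  forall i, continuous (fun w => v w i 0).
Arguments ccont {R T m}.

Lemma ccont_mul (R : realType) (T : topologicalType) m n (A : 'M[R]_(m, n))
  (v : T -> 'cV[R]_n) : ccont v -> ccont (fun w => A *m v w).
Proof.
move=> hv i; rewrite (_ : (fun w => _) = (fun w => \sum_j A i j * v w j 0)).
  apply: cont_sum => j x; exact: (continuousM (@cont_cst R T (A i j) x) (hv j x)).
by apply/funext => w; rewrite mxE.
Qed.

Arguments ccont_mul {R T m n} A {v}.

Lemma ccont_sub (R : realType) (T : topologicalType) m (f : 'cV[R]_m)
  (v1 v2 : T -> 'cV[R]_m) : ccont v1 -> ccont v2 -> ccont (fun w => f - v1 w - v2 w).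
Proof.
move=> h1 h2 i; rewrite (_ : (fun w => _) = (fun w => f i 0 + (- v1 w i 0) + (- v2 w i 0))).
  move=> x; exact: (continuousD (continuousD (@cont_cst R T (f i 0) x)
    (continuousN (h1 i x))) (continuousN (h2 i x))).
by apply/funext => w; rewrite !mxE.
Qed.

Arguments ccont_sub {R T m} f {v1 v2}.

Lemma cont_norm1 (R : realType) (T : topologicalType) m (v : T -> 'cV[R]_m) :
  ccont v -> continuous (fun w => norm1 (v w)).
Proof.
move=> hv; apply: cont_sum => i x; apply: (continuous_comp (hv i x)).
exact: norm_continuous.
Qed.

Arguments cont_norm1 {R T m v}.

Lemma cont_norm21 (R : realType) (T : topologicalType) d m (v : T -> 'cV[R]_(d * m)) :
  ccont v -> continuous (fun w => norm21 (v w)).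
Proof.
move=> hv; apply: cont_sum => i x; apply: continuous_comp; last exact: sqrt_continuous.
apply: cont_sum => j y; exact: (continuousM (hv _ y) (hv _ y)).
Qed.

Arguments cont_norm21 {R T d m v}.

Lemma cont_scale (R : realType) (T : topologicalType) (c : R) (g : T -> R) :
  continuous g -> continuous (fun w => c * g w).
Proof. move=> hg x; exact: (continuousM (@cont_cst R T c x) (hg x)). Qed.

Arguments cont_scale {R T} c {g}.

Definition uof (R : realType) N (w : 'rV[R]_(N + N)) : 'cV[R]_N := \col_i w 0 (lshift N i).
Definition lof (R : realType) N (w : 'rV[R]_(N + N)) : 'cV[R]_N := \col_i w 0 (rshift N i).
Arguments uof {R N}.
Arguments lof {R N}.

Lemma ccont_uof (R : realType) N : ccont (@uof R N).
Proof.
move=> i; rewrite (_ : (fun w => _) = (fun w : 'rV[R]_(N + N) => w 0 (lshift N i))).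
  exact: coord_continuous.
by apply/funext => w; rewrite mxE.
Qed.

Lemma ccont_lof (R : realType) N : ccont (@lof R N).
Proof.
move=> i; rewrite (_ : (fun w => _) = (fun w : 'rV[R]_(N + N) => w 0 (rshift N i))).
  exact: coord_continuous.
by apply/funext => w; rewrite mxE.
Qed.

Lemma uof_row (R : realType) N (u l : 'cV[R]_N) : uof (row_mx u^T l^T) = u.
Proof. by apply/matrixP => i j; rewrite ord1 mxE row_mxEl mxE. Qed.

Lemma lof_row (R : realType) N (u l : 'cV[R]_N) : lof (row_mx u^T l^T) = l.
Proof. by apply/matrixP => i j; rewrite ord1 mxE row_mxEr mxE. Qed.
Lemma in_box_iota (R : realType) N (u : 'cV[R]_N) : in_box u -> iota_box u = 0%E.
Proof. by move=> h; rewrite /iota_box asboolT. Qed.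

Arguments in_box_iota {R N u}.

Lemma notin_box_iota (R : realType) N (u : 'cV[R]_N) : ~ in_box u -> iota_box u = +oo%E.
Proof. by move=> h; rewrite /iota_box asboolF. Qed.

Arguments notin_box_iota {R N u}.

Lemma gradxy_cvec (R : realType) nz ny nx (l : 'cV[R]_(nz * ny.+1 * nx.+1)) :
  grad_xy R nx.+1 ny.+1 nz *m cvec l = 0.
Proof.
apply/matrixP => k j; rewrite ord1; case: k / mxtens_indexP => jj i.
rewrite /grad_xy stack_mul [RHS]mxE.
case: jj => [[|[|//]] hj] /=.
- by rewrite Dx_cvec mxE.
- by rewrite Dy_cvec mxE.
Qed.

Lemma gen (R : realType) nz ny nx (f : 'cV[R]_(nz * ny.+1 * nx.+1)) (hf : in_box f)
  (mu3 : R) (h3 : 0 < mu3) (Tu : 'cV[R]_(nz * ny.+1 * nx.+1) -> R)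
  (HT0 : forall u, 0 <= Tu u)
  (HTc : continuous (fun w : 'rV[R]_(nz * ny.+1 * nx.+1 + nz * ny.+1 * nx.+1) => Tu (uof w))) :
  exists u s l, is_minimizer (fun u s l => ((Tu u)%:E + iota_box u)
     + (norm1 (Dy R nx.+1 ny.+1 nz *m s))%:E
     + (mu3 * norm21 (grad_xy R nx.+1 ny.+1 nz *m l))%:E)%E f u s l.
Proof.
set N := nz * ny.+1 * nx.+1 in f hf Tu HT0 HTc *.
set Dyy := Dy R nx.+1 ny.+1 nz. set Gxy := grad_xy R nx.+1 ny.+1 nz.
pose G (u l : 'cV[R]_N) := Tu u + norm1 (Dyy *m (f - u - l)) + mu3 * norm21 (Gxy *m l).
pose Gw (w : 'rV[R]_(N + N)) := G (uof w) (lof w).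
have Gc : continuous Gw.
  move=> x; rewrite /Gw /G.
  have c1 := HTc x.
  have c2 := cont_norm1 (ccont_mul Dyy (ccont_sub f (@ccont_uof R N) (@ccont_lof R N))) x.
  have c3 := cont_scale mu3 (cont_norm21 (ccont_mul Gxy (@ccont_lof R N))) x.
  have c12 := continuousD c1 c2.
  exact: (continuousD c12 c3).
have G0 : forall u l, 0 <= norm21 (Gxy *m l) /\ 0 <= Tu u + norm1 (Dyy *m (f - u - l)).
  move=> u l; split; first exact: norm21_ge0.
  by apply: addr_ge0 => //; exact: norm1_ge0.
pose C0 := G f 0.
have C00 : 0 <= C0.
  have [h1 h2] := G0 f 0; apply: addr_ge0 => //; exact: mulr_ge0 (ltW h3) h1.
pose B := (nx + ny)%:R * (C0 / mu3).
have B0 : 0 <= B by apply: mulr_ge0 => //; apply: divr_ge0 => //; exact: ltW.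
pose A (i : 'I_(N + N)) : set R :=
  match split i with inl _ => `[0, 1]%classic | inr _ => `[- B, B]%classic end.
pose K : set 'rV[R]_(N + N) := fun w => forall i, A i (w 0 i).
have Kc : compact K.
  by apply: rV_compact => i; rewrite /A; case: split => _; exact: segment_compact.
have AL : forall i x, A (lshift N i) x <-> (0 <= x <= 1).
  move=> i x; rewrite /A -[lshift N i]/(unsplit (inl i : 'I_N + 'I_N)) unsplitK /=.
  by rewrite in_itv.
have AR : forall i x, A (rshift N i) x <-> (- B <= x <= B).
  move=> i x; rewrite /A -[rshift N i]/(unsplit (inr i : 'I_N + 'I_N)) unsplitK /=.
  by rewrite in_itv.
have memK : forall u l : 'cV[R]_N, in_box u -> (forall i, - B <= l i 0 <= B) ->
    K (row_mx u^T l^T).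
  move=> u l hu hl k; rewrite -[k]splitK; case: (split k) => j.
  - by apply/AL; rewrite row_mxEl mxE; exact: hu.
  - by apply/AR; rewrite row_mxEr mxE; exact: hl.
have Kbox : forall w, K w -> in_box (uof w).
  by move=> w Kw i; have /AL := Kw (lshift N i); rewrite mxE.
have K0 : K (row_mx f^T 0^T).
  apply: memK => // i; rewrite !mxE oppr_le0 B0 //.
have [ws wsK wsmin] := compact_EVT_min (ex_intro _ _ K0) Kc (@continuous_subspaceT _ _ K Gw Gc).
have {}wsK : K ws by move: wsK; rewrite inE.
have {}wsmin : forall w, K w -> Gw ws <= Gw w.
  by move=> w Kw; apply: wsmin; rewrite inE.
exists (uof ws), (f - uof ws - lof ws), (lof ws); split.
  by rewrite -addrA subrK addrC subrK.
move=> u' s' l' hfe.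
have hs : s' = f - u' - l'.
  apply/matrixP => i j; move/matrixP: hfe => /(_ i j); rewrite !mxE => <-; lra.
subst s'.
case: (pselect (in_box u')) => hu'; last first.
  by rewrite (notin_box_iota hu') addey // addye // leey.
rewrite (in_box_iota hu') (in_box_iota (Kbox _ wsK)) !adde0 -!EFinD lee_fin.
have Gws : Gw ws <= G u' l'; last exact: Gws.
case: (leP C0 (G u' l')) => hC.
  apply: le_trans (wsmin _ K0) _.
  by rewrite /Gw uof_row lof_row.
pose l'' := l' - cvec l'.
have Geq : G u' l'' = G u' l'.
  rewrite /G /l'' /Gxy /Dyy (mulmxBr (grad_xy R nx.+1 ny.+1 nz)) gradxy_cvec subr0.
  have -> : f - u' - (l' - cvec l') = (f - u' - l') + cvec l'.
    apply/matrixP => i j; rewrite !mxE; lra.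
  by rewrite mulmxDr Dy_cvec addr0.
have hn : norm21 (Gxy *m l') <= C0 / mu3.
  rewrite ler_pdivlMr // mulrC; apply: le_trans (ltW hC).
  have [_ h2] := G0 u' l'; rewrite /G lerDr //.
have Kw : K (row_mx u'^T l''^T).
  apply: memK => //; apply: idx_ind => z y x.
  rewrite -ler_norml /l'' !mxE zof_idx.
  apply: le_trans; first exact: (@l_bound R _ _ _ l' z y x).
  by apply: ler_wpM2l => //.
apply: le_trans (wsmin _ Kw) _.
by rewrite /Gw uof_row lof_row Geq.
Qed.
Theorem proposition1 (R : realType) (nx ny nz : nat)
  (hx : (1 <= nx)%N) (hy : (1 <= ny)%N) (hz : (1 <= nz)%N)
  (f : 'cV[R]_(nz * ny * nx)) (hf : in_box f)
  (mu1 mu2 mu3 : R) (h1 : 0 < mu1) (h2 : 0 < mu2) (h3 : 0 < mu3) :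
  (exists u s l, is_minimizer (@energy_a R nx ny nz mu1 mu2 mu3) f u s l) /\
  (exists u s l, is_minimizer (@energy_b R nx ny nz mu1 mu3) f u s l).
Proof.
move: f hf; case: nx hx => [//|nx] _; case: ny hy => [//|ny] _ f hf.
split.
- pose Tu (u : 'cV[R]_(nz * ny.+1 * nx.+1)) :=
    mu1 * norm21 (grad_xz R nx.+1 ny.+1 nz *m u) + mu2 * norm1 (Dzz R nx.+1 ny.+1 nz *m u).
  have HT0 : forall u, 0 <= Tu u.
    move=> u; apply: addr_ge0; apply: mulr_ge0.
    + exact: ltW. + exact: norm21_ge0. + exact: ltW. + exact: norm1_ge0.
  have HTc : continuous (fun w : 'rV[R]_(nz * ny.+1 * nx.+1 + nz * ny.+1 * nx.+1) =>
      Tu (uof w)).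
    move=> x; rewrite /Tu.
    exact: (continuousD (cont_scale mu1 (cont_norm21 (ccont_mul _ (@ccont_uof R _))) x)
      (cont_scale mu2 (cont_norm1 (ccont_mul _ (@ccont_uof R _))) x)).
  exact: (@gen R nz ny nx f hf mu3 h3 Tu HT0 HTc).
- pose Tu (u : 'cV[R]_(nz * ny.+1 * nx.+1)) :=
    mu1 * norm21 (grad_xyz R nx.+1 ny.+1 nz *m u).
  have HT0 : forall u, 0 <= Tu u.
    move=> u; apply: mulr_ge0; [exact: ltW | exact: norm21_ge0].
  have HTc : continuous (fun w : 'rV[R]_(nz * ny.+1 * nx.+1 + nz * ny.+1 * nx.+1) =>
      Tu (uof w)).
    move=> x; rewrite /Tu.
    exact: (cont_scale mu1 (cont_norm21 (ccont_mul _ (@ccont_uof R _))) x).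
  exact: (@gen R nz ny nx f hf mu3 h3 Tu HT0 HTc).
Qed.
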